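(* For every integer $k\ge2$ and every integer $x\ge2$, $\mathrm{ex}(2x,2k)\le 6\,\mathrm{ex}(x,2k)$.
   Context: The girth of a graph is the length of its shortest cycle ($\infty$ if none). $\mathrm{ex}(n,2k)$ is the maximum number of edges of a simple graph on $n$ vertices with girth at least $2k$. *)

(* Defs.v *)
From Stdlib Require Import ClassicalEpsilon.
From mathcomp Require Import all_boot.
Set Implicit Arguments. Unset Strict Implicit. Unset Printing Implicit Defensive.

Definition is_simple_graph n (E : {set {set 'I_n}}) : bool :=
  [forall e in E, #|e| == 2].

Definition adj n (E : {set {set 'I_n}}) : rel 'I_n :=
  fun u v => [set u; v] \in E.

(* girth >= g: every cycle (sequence of >= 3 distinct vertices, consecutive
   ones, cyclically, adjacent) has length >= g.  (Acyclic graphs: girth = oo.) *)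
Definition girth_ge n (E : {set {set 'I_n}}) (g : nat) : Prop :=
  forall s : seq 'I_n, uniq s -> 3 <= size s -> cycle (adj E) s -> g <= size s.

Definition girth_geb n (E : {set {set 'I_n}}) (g : nat) : bool :=
  if excluded_middle_informative (girth_ge E g) then true else false.

Definition ex (n g : nat) : nat :=
  \max_(E : {set {set 'I_n}} | is_simple_graph E && girth_geb E g) #|E|.

(* Main.v *)
Require Import Defs.
From Stdlib Require Import ClassicalEpsilon.
From mathcomp Require Import all_boot zify.
Set Implicit Arguments. Unset Strict Implicit. Unset Printing Implicit Defensive.

Lemma restrict_le n g (E : {set {set 'I_n}}) (S : {set 'I_n}) :
  is_simple_graph E -> girth_ge E g ->
  #|[set e in E | e \subset S]| <= ex #|S| g.
Proof.
move=> sE gE.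
pose f : 'I_#|S| -> 'I_n := @enum_val _ (mem S).
have finj : injective f := @enum_val_inj _ (mem S).
pose E' : {set {set 'I_#|S|}} := [set e' : {set 'I_#|S|} | f @: e' \in E].
have -> : [set e in E | e \subset S] = (fun e' : {set 'I_#|S|} => f @: e') @: E'.
  apply/setP=> e; rewrite inE; apply/andP/imsetP.
  - case=> eE eS. exists (f @^-1: e); last first.
      apply/esym/setP=> v; apply/imsetP/idP.
        by case=> i; rewrite inE => fi ->.
      move=> ve. have vS := subsetP eS v ve.
      exists (enum_rank_in vS v); last by rewrite /f enum_rankK_in.
      by rewrite inE /f enum_rankK_in.
    rewrite inE.
    suff ->: f @: (f @^-1: e) = e by [].
    apply/setP=> v; apply/imsetP/idP.
      by case=> i; rewrite inE => fi ->.
    move=> ve. have vS := subsetP eS v ve.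
    exists (enum_rank_in vS v); last by rewrite /f enum_rankK_in.
    by rewrite inE /f enum_rankK_in.
  - case=> e'; rewrite inE => He' ->; split=> //.
    apply/subsetP=> v /imsetP[i _ ->]; exact: enum_valP.
rewrite card_imset; last exact: imset_inj.
rewrite /ex.
apply: (@leq_bigmax_cond _ _ (fun E0 : {set {set 'I_#|S|}} => #|E0|)).
apply/andP; split.
  apply/forallP=> e'; apply/implyP; rewrite inE => He'.
  have := forallP sE (f @: e'); rewrite He' /= (card_imset _ finj) //.
rewrite /girth_geb; case: excluded_middle_informative => // [] []; move=> s us ss cs.
have := gE (map f s); rewrite map_inj_uniq // size_map; apply=> //.
rewrite cycle_map; apply: sub_cycle cs => u v.
by rewrite /adj /= inE imsetU1 imset_set1.
Qed.
Lemma count_sup n x (e : {set 'I_n}) : #|e| = 2 -> 2 <= x ->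
  #|[set S : {set 'I_n} | (#|S| == x) && (e \subset S)]| = 'C(n - 2, x - 2).
Proof.
move=> ce hx.
have -> : n - 2 = #|~: e| by rewrite cardsCs setCK card_ord ce.
rewrite -cards_draws.
rewrite -(@card_in_imset _ _ (fun S => S :\: e)); last first.
  move=> S1 S2; rewrite !inE => /andP[_ h1] /andP[_ h2] hD.
  have key : forall S : {set 'I_n}, e \subset S -> e :|: S :\: e = S.
    by move=> S hS; rewrite -{2}(setID S e) (setIidPr hS).
  by rewrite -(key _ h1) -(key _ h2) hD.
congr (#|pred_of_set _|); apply/setP=> B; rewrite inE; apply/imsetP/andP.
- case=> S; rewrite inE => /andP[/eqP cS eS] ->; split.
    by apply/subsetP=> v; rewrite !inE => /andP[].
  by rewrite cardsD (setIidPr eS) cS ce.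
- case=> BC /eqP cB; exists (e :|: B); last first.
    apply/setP=> v; rewrite !inE; case: (boolP (v \in e)) => //= ve.
    apply/negbTE; apply: contraL ve => vB; have := subsetP BC v vB; by rewrite inE.
  have dis : e :&: B = set0.
    apply/setP=> v; rewrite !inE; case: (boolP (v \in B)) => vB; last by rewrite andbF.
    by have := subsetP BC v vB; rewrite inE => /negbTE ->.
  rewrite inE cardsU dis cards0 subn0 ce cB subnKC // eqxx /=.
  exact: subsetUl.
Qed.
Lemma binarith y : 'C((y + 2) * 2, y + 2) <= 6 * 'C((y+2)*2 - 2, y + 2 - 2).
Proof.
have e1 : (y+2)*2 - 2 = (2*y+3).-1 by lia.
have e2 : y + 2 - 2 = y by lia.
rewrite e1 e2.
have h1 := mul_bin_diag (2*y+3) y.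
have h2 := mul_bin_diag (2*y+4) (y.+1).
have e3 : (y+2)*2 = 2*y+4 by lia.
have e4 : (2*y+4).-1 = 2*y+3 by lia.
rewrite e4 in h2. rewrite e3.
move: h1 h2.
set C := 'C(2*y+4, _). set D := 'C(2*y+3, _). set C' := 'C(_, y).
have e5 : y.+2 = y + 2 by lia. rewrite /C -e5 -/C.
move=> h1 h2.
have : C * (y+1) * (y+2) <= 6 * C' * (y+1) * (y+2) by nia.
rewrite leq_pmul2r ?addn2 // leq_pmul2r ?addn1 //.
Qed.

Lemma dc n x (E : {set {set 'I_n}}) :
  \sum_(S in [set S : {set 'I_n} | #|S| == x]) #|[set e in E | e \subset S]| =
  \sum_(e in E) #|[set S : {set 'I_n} | (#|S| == x) && (e \subset S)]|.
Proof.
under eq_bigr => S _ do rewrite -sum1_card.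
rewrite (exchange_big_dep (fun e => e \in E)) /=; last by move=> S e _; rewrite inE => /andP[].
apply: eq_bigr => e eE; rewrite -sum1_card; apply: eq_bigl => S; rewrite !inE eE.
by [].
Qed.

Theorem lemma5p2 (k x : nat) :
  2 <= k -> 2 <= x -> ex (2 * x) (2 * k) <= 6 * ex x (2 * k).
Proof.
move=> hk hx.
rewrite {1}/ex; apply/bigmax_leqP => E /andP[sE gb].
have gE : girth_ge E (2 * k).
  by move: gb; rewrite /girth_geb; case: excluded_middle_informative.
have A : \sum_(S in [set S : {set 'I_(2 * x)} | #|S| == x])
           #|[set e in E | e \subset S]| <= 'C(2 * x, x) * ex x (2 * k).
  apply: leq_trans (_ : \sum_(S in [set S : {set 'I_(2 * x)} | #|S| == x]) ex x (2 * k) <= _).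
    apply: leq_sum => S; rewrite inE => /eqP cS.
    by have := restrict_le S sE gE; rewrite cS.
  by rewrite sum_nat_const card_draws card_ord.
rewrite dc (eq_bigr (fun _ => 'C(2 * x - 2, x - 2))) in A; last first.
  move=> e eE; apply: count_sup => //; by have := forallP sE e; rewrite eE => /eqP.
rewrite sum_nat_const in A.
have B : 'C(2 * x, x) <= 6 * 'C(2 * x - 2, x - 2) /\ 0 < 'C(2 * x - 2, x - 2).
  move: hx; clear; move=> hx.
  have [y ->] : exists y, x = y + 2 by exists (x - 2); lia.
  split; last by rewrite bin_gt0; lia.
  by have := binarith y; rewrite [(y + 2) * 2]mulnC.
case: B => B Cpos.
rewrite -(leq_pmul2r Cpos).
apply: leq_trans A _.
by rewrite mulnAC leq_mul2r B orbT.
Qed.
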